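(* In the setting of an economy of $N$ companies as described in the context, under the purely intermediated market scheme with $\tau$ and $\lambda$ chosen so that aggregate emissions equal $A$ under both schemes, the GDP satisfies $$\mathrm{GDP}^{\mathrm{mar}}=\mathrm{GDP}^{\mathrm{tax}}+\tfrac12\Big(\tfrac{A^2}{\varrho}-\sum_i\tfrac{(\mathrm{E}^{\mathrm{mar}}_i)^2}{\varrho_i}\Big),\quad\text{where}\quad \tfrac{A^2}{\varrho}-\sum_i\tfrac{(\mathrm{E}^{\mathrm{mar}}_i)^2}{\varrho_i}\le0.$$ Moreover, $$\mathcal{W}^{\mathrm{mar}}_{\mathrm{C}}+\mathcal{W}^{\mathrm{mar}}_{\mathrm{R}}=\mathcal{W}^{\mathrm{tax}}_{\mathrm{C}}+\mathcal{W}^{\mathrm{tax}}_{\mathrm{R}}+\tfrac32\Big(\tfrac{A^2}{\varrho}-\sum_i\tfrac{(\mathrm{E}^{\mathrm{mar}}_i)^2}{\varrho_i}\Big)-\tfrac{A^2}{\varrho},$$ where the last two terms together are $<0$, so the combined wealth of companies and regulator is lower under the market scheme.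
   Context: Economy of $N$ companies indexed by $i$, with $\pi^0_i,\pi^1_i,\gamma_i>0$, $\mathrm{E}^{\mathrm{bau}}_i=\pi^0_i/\pi^1_i$, $\varrho_i=1/\pi^1_i+1/\gamma_i$, $\mathrm{E}^{\mathrm{bau}}=\sum_i\mathrm{E}^{\mathrm{bau}}_i$, $\varrho=\sum_i\varrho_i$; $A>0$ certificates are auctioned, $\lambda>0$ is the penalty and $\tau>0$ the tax rate, with $\tau\varrho_i<\mathrm{E}^{\mathrm{bau}}_i$, $\lambda\varrho_i<\mathrm{E}^{\mathrm{bau}}_i$, and $\tfrac12[\mathrm{E}^{\mathrm{bau}}+\varrho(\max_i(\mathrm{E}^{\mathrm{bau}}_i/\varrho_i)-2\lambda)]\le A<\sum_i[(\mathrm{E}^{\mathrm{bau}}_i/2)\vee(\mathrm{E}^{\mathrm{bau}}_i-\lambda\varrho_i)]$. Company $i$ has raw wealth $\pi_i(q)=\pi^0_iq-\tfrac{\pi^1_i}{2}q^2$, emissions $e^{-a}q$ with green effort $a$ at cost $\tfrac{\gamma_i}{2}[(1-e^{-a})q]^2$. Tax scheme: company maximizes $\pi_i(q)-c_i(q,a)-\tau e^{-a}q$; its optimal wealth is $\mathcal{W}^{\mathrm{tax}}_{\mathrm{C},i}$ and the regulator collects $\mathcal{W}^{\mathrm{tax}}_{\mathrm{R}}=\tau\sum_i\mathrm{E}^{\mathrm{tax}}_i$. Market scheme: company facing price $P$ maximizes $\pi_i(q)-c_i(q,a)-\delta P-\lambda(e^{-a}q-\delta)^+$ over $(q,a,\delta)$,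 with optimal demand $\delta_i(P)=\mathrm{E}^{\mathrm{bau}}_i-P\varrho_i$, emissions $\mathrm{E}^{\mathrm{mar}}_i$ and wealth $\mathcal{W}^{\mathrm{mar}}_{\mathrm{C},i}$. Purely intermediated: each company buys from its intermediary, which buys at spot price $S$ and sets $\bm{P_i}(S)=\arg\max_{P\in[S,\lambda]}\delta_i(P)(P-S)$, earning $\mathcal{W}^{\mathrm{mar}}_{\mathrm{F},i}=\delta_i(\bm{P_i})(\bm{P_i}-S)$; equilibrium $\bm S$ solves $A=\sum_i\delta_i(\bm{P_i}(\bm S))$; regulator earns $\mathcal{W}^{\mathrm{mar}}_{\mathrm{R}}=\lambda\sum_i(\mathrm{E}^{\mathrm{mar}}_i-\bm{\delta_i})^++\bm SA$. Aggregates are sums over $i$. $\mathrm{GDP}^{\cdot}=\mathcal{W}^{\cdot}_{\mathrm{C}}+\mathcal{W}^{\cdot}_{\mathrm{F}}+\mathcal{W}^{\cdot}_{\mathrm{R}}$, with $\mathcal{W}^{\mathrm{tax}}_{\mathrm{F}}=0$. *)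

(* Defs.v *)
From HB Require Import structures.
From mathcomp Require Import all_boot all_order all_algebra.
From mathcomp Require Import all_classical all_reals all_analysis.
Set Implicit Arguments. Unset Strict Implicit. Unset Printing Implicit Defensive.
Import Order.TTheory GRing.Theory Num.Theory.
Local Open Scope ring_scope.

Definition Ebau {R : realType} {N : nat} (pi0 pi1 : 'I_N -> R) (i : 'I_N) : R :=
  pi0 i / pi1 i.

Definition rho {R : realType} {N : nat} (pi1 gam : 'I_N -> R) (i : 'I_N) : R :=
  (pi1 i)^-1 + (gam i)^-1.

Definition Ebau_tot {R : realType} {N : nat} (pi0 pi1 : 'I_N -> R) : R :=
  \sum_(i < N) Ebau pi0 pi1 i.

Definition rho_tot {R : realType} {N : nat} (pi1 gam : 'I_N -> R) : R :=
  \sum_(i < N) rho pi1 gam i.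

(* max_i (E^bau_i / rho_i); all these ratios are positive under the
   standing assumptions, so 0 as neutral element is harmless. *)
Definition max_ratio {R : realType} {N : nat} (pi0 pi1 gam : 'I_N -> R) : R :=
  \big[Num.max/0]_(i < N) (Ebau pi0 pi1 i / rho pi1 gam i).

Definition raw_wealth {R : realType} {N : nat} (pi0 pi1 : 'I_N -> R)
  (i : 'I_N) (q : R) : R := pi0 i * q - pi1 i / 2 * q ^+ 2.

Definition emission {R : realType} (q a : R) : R := expR (- a) * q.

Definition green_cost {R : realType} {N : nat} (gam : 'I_N -> R)
  (i : 'I_N) (q a : R) : R := gam i / 2 * ((1 - expR (- a)) * q) ^+ 2.

Definition tax_obj {R : realType} {N : nat} (pi0 pi1 gam : 'I_N -> R) (tau : R)
  (i : 'I_N) (q a : R) : R :=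
  raw_wealth pi0 pi1 i q - green_cost gam i q a - tau * emission q a.

Definition tax_optimal {R : realType} {N : nat} (pi0 pi1 gam : 'I_N -> R) (tau : R)
  (i : 'I_N) (q a : R) : Prop :=
  0 <= q /\ 0 <= a /\
  forall q' a', 0 <= q' -> 0 <= a' ->
    tax_obj pi0 pi1 gam tau i q' a' <= tax_obj pi0 pi1 gam tau i q a.

Definition mar_obj {R : realType} {N : nat} (pi0 pi1 gam : 'I_N -> R) (lambda P : R)
  (i : 'I_N) (q a d : R) : R :=
  raw_wealth pi0 pi1 i q - green_cost gam i q a - d * P
  - lambda * Num.max (emission q a - d) 0.

Definition mar_optimal {R : realType} {N : nat} (pi0 pi1 gam : 'I_N -> R) (lambda P : R)
  (i : 'I_N) (q a d : R) : Prop :=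
  0 <= q /\ 0 <= a /\ 0 <= d /\
  forall q' a' d', 0 <= q' -> 0 <= a' -> 0 <= d' ->
    mar_obj pi0 pi1 gam lambda P i q' a' d' <= mar_obj pi0 pi1 gam lambda P i q a d.

Definition demand {R : realType} {N : nat} (pi0 pi1 gam : 'I_N -> R)
  (i : 'I_N) (P : R) : R := Ebau pi0 pi1 i - P * rho pi1 gam i.

Definition intermediary_price {R : realType} {N : nat} (pi0 pi1 gam : 'I_N -> R)
  (lambda S : R) (i : 'I_N) (P : R) : Prop :=
  S <= P <= lambda /\
  forall P', S <= P' <= lambda ->
    demand pi0 pi1 gam i P' * (P' - S) <= demand pi0 pi1 gam i P * (P - S).

Definition clears_market {R : realType} {N : nat} (pi0 pi1 gam : 'I_N -> R)
  (lambda A S : R) : Prop :=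
  exists Pv : 'I_N -> R,
    (forall i, intermediary_price pi0 pi1 gam lambda S i (Pv i)) /\
    \sum_(i < N) demand pi0 pi1 gam i (Pv i) = A.

Definition equilibrium_spot {R : realType} {N : nat} (pi0 pi1 gam : 'I_N -> R)
  (lambda A S : R) : Prop :=
  clears_market pi0 pi1 gam lambda A S /\
  forall S', clears_market pi0 pi1 gam lambda A S' -> S' = S.

(* Main.v *)
Require Import Defs.
From mathcomp Require Import all_boot all_order all_algebra.
From mathcomp Require Import all_classical all_reals all_analysis.
From mathcomp Require Import lra ring.
Import Order.TTheory GRing.Theory Num.Theory.
Local Open Scope ring_scope.

Definition Vf {R : realType} (a0 a1 g p : R) : R :=
  a0 ^+ 2 / (2 * a1) - p * (a0 / a1) + p ^+ 2 * (a1^-1 + g^-1) / 2.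

Lemma core_id {R : realType} (a0 a1 g p q e : R) : a1 != 0 -> g != 0 ->
  a0 * q - a1 / 2 * q ^+ 2 - g / 2 * (q - e) ^+ 2 - p * e =
  Vf a0 a1 g p - a1 / 2 * (q - (a0 - p) / a1) ^+ 2 - g / 2 * ((q - e) - p / g) ^+ 2.
Proof. move=> h1 h2; rewrite /Vf; field; by rewrite h1 h2. Qed.

Lemma cand {R : realType} {a0 a1 g p : R} : 0 < a1 -> 0 < g -> 0 <= p ->
  p * (a1^-1 + g^-1) < a0 / a1 ->
  exists a, 0 <= a /\ expR (- a) * ((a0 - p) / a1) = a0 / a1 - p * (a1^-1 + g^-1)
     /\ (a0 - p) / a1 - expR (- a) * ((a0 - p) / a1) = p / g.
Proof.
move=> h1 h2 hp hlt.
set qs := (a0 - p) / a1; set es := a0 / a1 - p * (a1^-1 + g^-1).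
have hes : 0 < es by rewrite /es subr_gt0.
have hd : qs - es = p / g.
  rewrite /qs /es; field; by rewrite ?gt_eqF.
have hqs : 0 < qs.
  have : 0 <= p / g by rewrite divr_ge0 // ltW.
  lra.
exists (ln (qs / es)); split.
  apply: ln_ge0; rewrite ler_pdivlMr // mul1r. 
  have : 0 <= p / g by rewrite divr_ge0 // ltW.
  lra.
have -> : expR (- ln (qs / es)) * qs = es.
  rewrite expRN lnK; last by rewrite posrE divr_gt0.
  rewrite invf_div mulrAC -mulrA divff ?mulr1 //; by rewrite gt_eqF.
split => //.
Qed.

Lemma sq0 {R : realType} (c x : R) : 0 < c -> c / 2 * x ^+ 2 = 0 -> x = 0.
Proof.
move=> hc /eqP; rewrite mulf_eq0 sqrf_eq0 => /orP[|/eqP//].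
by rewrite mulf_eq0 invr_eq0 pnatr_eq0 orbF gt_eqF.
Qed.

Lemma sq_ge0 {R : realType} (c x : R) : 0 < c -> 0 <= c / 2 * x ^+ 2.
Proof. move=> hc; rewrite mulr_ge0 ?sqr_ge0 // divr_ge0 // ?ltW //. Qed.

Lemma obj_core {R : realType} {N : nat} (pi0 pi1 gam : 'I_N -> R) i q a p :
  0 < pi1 i -> 0 < gam i ->
  raw_wealth pi0 pi1 i q - green_cost gam i q a - p * emission q a =
  Vf (pi0 i) (pi1 i) (gam i) p - pi1 i / 2 * (q - (pi0 i - p) / pi1 i) ^+ 2
   - gam i / 2 * ((q - emission q a) - p / gam i) ^+ 2.
Proof.
move=> h1 h2; rewrite -core_id ?gt_eqF //.
rewrite /raw_wealth /green_cost /emission; ring.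
Qed.

Lemma opt_core {R : realType} {N : nat} (pi0 pi1 gam : 'I_N -> R) i q a p :
  0 < pi1 i -> 0 < gam i ->
  Vf (pi0 i) (pi1 i) (gam i) p <= raw_wealth pi0 pi1 i q - green_cost gam i q a - p * emission q a ->
  emission q a = Ebau pi0 pi1 i - p * rho pi1 gam i /\
  raw_wealth pi0 pi1 i q - green_cost gam i q a - p * emission q a = Vf (pi0 i) (pi1 i) (gam i) p.
Proof.
move=> h1 h2; rewrite obj_core //.
set s1 := _ / 2 * _ ^+ 2; set s2 := gam i / 2 * _ ^+ 2 => hle.
have hs1 : 0 <= s1 by apply: sq_ge0.
have hs2 : 0 <= s2 by apply: sq_ge0.
have e1 : s1 = 0 by lra.
have e2 : s2 = 0 by lra.
split; last by rewrite e1 e2 !subr0.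
move/sq0: e1 => /(_ h1) /eqP; rewrite subr_eq0 => /eqP hq.
move/sq0: e2 => /(_ h2) /eqP; rewrite subr_eq0 => /eqP.
move=> he.
have -> : emission q a = (pi0 i - p) / pi1 i - p / gam i.
  by rewrite -he -hq; ring.
rewrite /Ebau /rho; field; by rewrite !gt_eqF.
Qed.

Lemma cand_obj {R : realType} {N : nat} (pi0 pi1 gam : 'I_N -> R) i p :
  0 < pi1 i -> 0 < gam i -> 0 <= p -> p * rho pi1 gam i < Ebau pi0 pi1 i ->
  exists q a, [/\ 0 <= q, 0 <= a, emission q a = Ebau pi0 pi1 i - p * rho pi1 gam i &
   raw_wealth pi0 pi1 i q - green_cost gam i q a - p * emission q a = Vf (pi0 i) (pi1 i) (gam i) p].
Proof.
move=> h1 h2 hp hlt.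
have [a [ha [he hd]]] := cand h1 h2 hp hlt.
exists ((pi0 i - p) / pi1 i), a; split => //.
- have : 0 < emission ((pi0 i - p) / pi1 i) a by rewrite /emission he subr_gt0.
  rewrite /emission pmulr_rgt0 ?expR_gt0 // => /ltW //.
rewrite obj_core // subrr expr0n /= mulr0 subr0 /emission hd subrr expr0n /= mulr0 subr0 //.
Qed.

Lemma tax_char {R : realType} {N : nat} (pi0 pi1 gam : 'I_N -> R) (tau : R) i (q a : R) :
  0 < pi1 i -> 0 < gam i -> 0 <= tau -> tau * rho pi1 gam i < Ebau pi0 pi1 i ->
  tax_optimal pi0 pi1 gam tau i q a ->
  emission q a = Ebau pi0 pi1 i - tau * rho pi1 gam i /\
  tax_obj pi0 pi1 gam tau i q a = Vf (pi0 i) (pi1 i) (gam i) tau.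
Proof.
move=> h1 h2 ht hlt [_ [_ hop]].
have [qs [as_ [hq ha _ hv]]] := cand_obj pi0 pi1 gam i tau h1 h2 ht hlt.
have := hop qs as_ hq ha; rewrite /tax_obj hv => H.
exact: opt_core.
Qed.

Lemma mar_char {R : realType} {N : nat} (pi0 pi1 gam : 'I_N -> R) (lambda p : R) i (q a : R) :
  0 < pi1 i -> 0 < gam i -> 0 < lambda -> p <= lambda ->
  lambda * rho pi1 gam i < Ebau pi0 pi1 i ->
  mar_optimal pi0 pi1 gam lambda p i q a (demand pi0 pi1 gam i p) ->
  [/\ 0 <= p, emission q a = demand pi0 pi1 gam i p &
   mar_obj pi0 pi1 gam lambda p i q a (demand pi0 pi1 gam i p) = Vf (pi0 i) (pi1 i) (gam i) p].
Proof.
move=> h1 h2 hl hpl hlt [hq [ha [hd hop]]].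
set d := demand pi0 pi1 gam i p in hd hop *.
have hp : 0 <= p.
  have := hop q a (d + 1) hq ha; rewrite addr_ge0 // => /(_ isT).
  rewrite /mar_obj.
  have : Num.max (emission q a - (d + 1)) 0 <= Num.max (emission q a - d) 0.
    rewrite ge_max !le_max lexx !orbT andbT; apply/orP; left; lra.
  set m1 := Num.max _ _; set m2 := Num.max _ _ => hm.
  have : lambda * m1 <= lambda * m2 by rewrite ler_wpM2l // ltW.
  lra.
have hlt' : p * rho pi1 gam i < Ebau pi0 pi1 i.
  apply: le_lt_trans hlt; rewrite ler_wpM2r // /rho addr_ge0 // invr_ge0 ltW //.
have [qs [as_ [hqs has hes hv]]] := cand_obj pi0 pi1 gam i p h1 h2 hp hlt'.
have := hop qs as_ (emission qs as_) hqs has.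
rewrite hes subr_ge0 ltW // => /(_ isT).
rewrite /mar_obj -hes subrr maxxx mulr0 subr0 mulrC hv => H.
have hb : d * p + lambda * Num.max (emission q a - d) 0 >= p * emission q a.
  case: (lerP d (emission q a)) => hde.
    have -> : Num.max (emission q a - d) 0 = emission q a - d.
      by apply/max_idPl; rewrite subr_ge0.
    nra.
  have -> : Num.max (emission q a - d) 0 = 0.
    by apply/max_idPr; rewrite subr_le0 ltW.
  nra.
have [he hv2] : emission q a = Ebau pi0 pi1 i - p * rho pi1 gam i /\
  raw_wealth pi0 pi1 i q - green_cost gam i q a - p * emission q a = Vf (pi0 i) (pi1 i) (gam i) p.
  apply: opt_core => //. move: H; rewrite /mar_obj; lra.
have he' : emission q a = d by rewrite he.
split => //.
rewrite /mar_obj -/d -he' subrr maxxx mulr0 subr0 mulrC -hv2 //.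
Qed.

Lemma Vf_alt {R : realType} {N : nat} (pi0 pi1 gam : 'I_N -> R) i (p : R) :
  0 < pi1 i -> 0 < gam i ->
  Vf (pi0 i) (pi1 i) (gam i) p =
  pi0 i ^+ 2 / (2 * pi1 i) - p * Ebau pi0 pi1 i + p ^+ 2 * rho pi1 gam i / 2.
Proof. by move=> h1 h2; rewrite /Vf /Ebau /rho. Qed.

Lemma vertex_id {R : realType} (b r S P : R) : r != 0 ->
  (b - P * r) * (P - S) =
  (b - ((b / r + S) / 2) * r) * ((b / r + S) / 2 - S) - r * (P - (b / r + S) / 2) ^+ 2.
Proof. move=> hr; field; by rewrite hr. Qed.

Lemma vertex_price {R : realType} {N : nat} (pi0 pi1 gam : 'I_N -> R) (lambda S : R) i :
  0 < rho pi1 gam i ->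
  S <= (Ebau pi0 pi1 i / rho pi1 gam i + S) / 2 <= lambda ->
  intermediary_price pi0 pi1 gam lambda S i ((Ebau pi0 pi1 i / rho pi1 gam i + S) / 2).
Proof.
move=> hr hb; split => // P' _.
rewrite /demand [X in X <= _](vertex_id _ _ _ _ (negbT (gt_eqF hr))).
have : 0 <= rho pi1 gam i * (P' - (Ebau pi0 pi1 i / rho pi1 gam i + S) / 2) ^+ 2.
  by rewrite mulr_ge0 ?sqr_ge0 // ltW.
lra.
Qed.

Lemma vertex_uniq {R : realType} {N : nat} (pi0 pi1 gam : 'I_N -> R) (lambda S : R) i P :
  0 < rho pi1 gam i ->
  S <= (Ebau pi0 pi1 i / rho pi1 gam i + S) / 2 <= lambda ->
  intermediary_price pi0 pi1 gam lambda S i P ->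
  P = (Ebau pi0 pi1 i / rho pi1 gam i + S) / 2.
Proof.
move=> hr hb [_ hop]; have := hop _ hb.
rewrite /demand [X in _ <= X](vertex_id _ _ _ _ (negbT (gt_eqF hr))).
set v := (_ + S) / 2 => H.
have H2 : rho pi1 gam i * (P - v) ^+ 2 <= 0 by lra.
have H3 : 0 <= rho pi1 gam i * (P - v) ^+ 2 by rewrite mulr_ge0 ?sqr_ge0 // ltW.
have /eqP : rho pi1 gam i * (P - v) ^+ 2 = 0 by lra.
rewrite mulf_eq0 gt_eqF //= sqrf_eq0 subr_eq0 => /eqP //.
Qed.
Theorem corollary3p2 (R : realType) (N : nat) (pi0 pi1 gam : 'I_N -> R)
  (A lambda tau : R)
  (hpi0 : forall i, 0 < pi0 i) (hpi1 : forall i, 0 < pi1 i)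
  (hgam : forall i, 0 < gam i)
  (hA : 0 < A) (hlambda : 0 < lambda) (htau : 0 < tau)
  (htau_i : forall i, tau * rho pi1 gam i < Ebau pi0 pi1 i)
  (hlambda_i : forall i, lambda * rho pi1 gam i < Ebau pi0 pi1 i)
  (hA_low : (Ebau_tot pi0 pi1
             + rho_tot pi1 gam * (max_ratio pi0 pi1 gam - 2 * lambda)) / 2 <= A)
  (hA_up : A < \sum_(i < N) Num.max (Ebau pi0 pi1 i / 2)
                                    (Ebau pi0 pi1 i - lambda * rho pi1 gam i))
  (* tax scheme: optimal choices of the companies *)
  (qt at_ : 'I_N -> R)
  (hqt : forall i, tax_optimal pi0 pi1 gam tau i (qt i) (at_ i))
  (* purely intermediated market scheme *)
  (S : R) (hS : equilibrium_spot pi0 pi1 gam lambda A S)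
  (P : 'I_N -> R) (hP : forall i, intermediary_price pi0 pi1 gam lambda S i (P i))
  (qm am : 'I_N -> R)
  (hqm : forall i, mar_optimal pi0 pi1 gam lambda (P i) i (qm i) (am i)
                     (demand pi0 pi1 gam i (P i)))
  (* tau and lambda chosen so that aggregate emissions equal A in both schemes *)
  (hEtax : \sum_(i < N) emission (qt i) (at_ i) = A)
  (hEmar : \sum_(i < N) emission (qm i) (am i) = A) :
  let Etax := fun i => emission (qt i) (at_ i) in
  let Emar := fun i => emission (qm i) (am i) in
  let delta := fun i => demand pi0 pi1 gam i (P i) in
  let WC_tax := \sum_(i < N) tax_obj pi0 pi1 gam tau i (qt i) (at_ i) in
  let WF_tax := 0 in
  let WR_tax := tau * \sum_(i < N) Etax i in
  let GDP_tax := WC_tax + WF_tax + WR_tax in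
  let WC_mar := \sum_(i < N) mar_obj pi0 pi1 gam lambda (P i) i (qm i) (am i) (delta i) in
  let WF_mar := \sum_(i < N) delta i * (P i - S) in
  let WR_mar := lambda * \sum_(i < N) Num.max (Emar i - delta i) 0 + S * A in
  let GDP_mar := WC_mar + WF_mar + WR_mar in
  let D := A ^+ 2 / rho_tot pi1 gam
           - \sum_(i < N) (Emar i) ^+ 2 / rho pi1 gam i in
  [/\ GDP_mar = GDP_tax + D / 2,
      D <= 0,
      WC_mar + WR_mar = WC_tax + WR_tax + 3 / 2 * D - A ^+ 2 / rho_tot pi1 gam,
      3 / 2 * D - A ^+ 2 / rho_tot pi1 gam < 0
    & WC_mar + WR_mar < WC_tax + WR_tax].
Proof.
move=> Etax Emar delta WC_tax WF_tax WR_tax GDP_tax WC_mar WF_mar WR_mar GDP_mar D.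
have hN : (0 < N)%N.
  rewrite lt0n; apply/negP => /eqP hN0; subst N.
  by move: hA_up; rewrite big_ord0; lra.
have hr : forall i, 0 < rho pi1 gam i.
  by move=> i; rewrite /rho addr_gt0 // invr_gt0.
have hrt : 0 < rho_tot pi1 gam.
  rewrite /rho_tot (bigD1 (Ordinal hN)) //=; have := hr (Ordinal hN).
  have : 0 <= \sum_(i < N | i != Ordinal hN) rho pi1 gam i by apply: sumr_ge0 => i _; apply: ltW.
  lra.
set b := Ebau pi0 pi1 in hlambda_i htau_i hA_low hA_up *.
set r := rho pi1 gam in hr hlambda_i htau_i hA_low hA_up *.
set S0 := (Ebau_tot pi0 pi1 - 2 * A) / rho_tot pi1 gam.
have hS0 : S0 <= 2 * lambda - max_ratio pi0 pi1 gam.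
  rewrite /S0 ler_pdivrMr //; move: hA_low; rewrite ler_pdivrMr //; nra.
have hmax : forall i, b i / r i <= max_ratio pi0 pi1 gam.
  move=> i; exact: (le_bigmax 0 (fun i => Ebau pi0 pi1 i / rho pi1 gam i) i).
have hbr : forall i, lambda < b i / r i.
  by move=> i; rewrite ltr_pdivlMr.
have hvb : forall i, S0 <= (b i / r i + S0) / 2 <= lambda.
  move=> i; have := hmax i; have := hbr i; move: hS0 => ? ? ?.
  apply/andP; split; lra.
have hsum : \sum_(i < N) demand pi0 pi1 gam i ((b i / r i + S0) / 2) = A.
  have -> : \sum_(i < N) demand pi0 pi1 gam i ((b i / r i + S0) / 2)
     = \sum_(i < N) (b i / 2 - S0 / 2 * r i).
    apply: eq_bigr => i _; rewrite /demand -/b -/r; field; exact: (negbT (gt_eqF (hr i))).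
  rewrite sumrB -mulr_suml -mulr_sumr -/(Ebau_tot pi0 pi1) -/(rho_tot pi1 gam) /S0.
  field; exact: (negbT (gt_eqF hrt)).
have hSS : S = S0.
  rewrite -(proj2 hS S0) //; exists (fun i => (b i / r i + S0) / 2); split => //.
  by move=> i; apply: vertex_price.
subst S.
have hPi : forall i, P i = (b i / r i + S0) / 2.
  by move=> i; apply: (@vertex_uniq _ _ pi0 pi1 gam lambda) => //; apply: hP.
have hm : forall i, [/\ 0 <= P i, Emar i = delta i &
   mar_obj pi0 pi1 gam lambda (P i) i (qm i) (am i) (delta i) = Vf (pi0 i) (pi1 i) (gam i) (P i)].
  move=> i; apply: mar_char => //; first by case: (hP i) => /andP[].
have ht : forall i, Etax i = b i - tau * r i /\
   tax_obj pi0 pi1 gam tau i (qt i) (at_ i) = Vf (pi0 i) (pi1 i) (gam i) tau.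
  by move=> i; apply: tax_char => //; apply: ltW.
have hEt : Ebau_tot pi0 pi1 - tau * rho_tot pi1 gam = A.
  rewrite -hEtax /Ebau_tot /rho_tot mulr_sumr -sumrB; apply: eq_bigr => i _.
  exact: (esym (proj1 (ht i))).
have hWCt : WC_tax = \sum_(i < N) Vf (pi0 i) (pi1 i) (gam i) tau.
  by apply: eq_bigr => i _; rewrite (proj2 (ht i)).
have hWRt : WR_tax = tau * A by rewrite /WR_tax hEtax.
have hWCm : WC_mar = \sum_(i < N) Vf (pi0 i) (pi1 i) (gam i) (P i).
  by apply: eq_bigr => i _; case: (hm i).
have hWRm : WR_mar = S0 * A.
  rewrite /WR_mar big1 ?mulr0 ?add0r // => i _; case: (hm i) => _ -> _.
  by rewrite subrr maxxx.
have hWF : WF_mar = \sum_(i < N) Emar i ^+ 2 / r i.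
  apply: eq_bigr => i _; case: (hm i) => _ -> _; rewrite /delta /demand hPi -/b -/r.
  field; exact: (negbT (gt_eqF (hr i))).
have key : \sum_(i < N) (Vf (pi0 i) (pi1 i) (gam i) (P i) + Emar i ^+ 2 / r i * (3 / 2)
     - Vf (pi0 i) (pi1 i) (gam i) tau)
   = \sum_(i < N) ((tau - S0) * b i + (S0 ^+ 2 - tau ^+ 2) / 2 * r i).
  apply: eq_bigr => i _; case: (hm i) => _ -> _.
  rewrite !Vf_alt // -/b -/r /delta /demand hPi -/b -/r.
  field; by rewrite (gt_eqF (hr i)) (gt_eqF (hpi1 i)).
move: key; rewrite sumrB big_split /= => key; move: key; rewrite [X in _ = X]big_split /= -mulr_suml -!mulr_sumr.
rewrite -/(Ebau_tot pi0 pi1) -/(rho_tot pi1 gam) -hWCt -hWCm -hWF => key.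
have hD : D <= 0.
  set k := A / rho_tot pi1 gam.
  have cs : \sum_(i < N) (Emar i - k * r i) ^+ 2 / r i
     = \sum_(i < N) (Emar i ^+ 2 / r i - (2 * k) * Emar i + k ^+ 2 * r i).
    apply: eq_bigr => i _; field; exact: (negbT (gt_eqF (hr i))).
  move: cs; rewrite big_split sumrB /= -!mulr_sumr hEmar -/(rho_tot pi1 gam) => cs.
  have : 0 <= \sum_(i < N) (Emar i - k * r i) ^+ 2 / r i.
    by apply: sumr_ge0 => i _; rewrite divr_ge0 ?sqr_ge0 // ltW.
  rewrite cs /D /k => H.
  have -> : A ^+ 2 / rho_tot pi1 gam = 2 * (A / rho_tot pi1 gam) * A
     - (A / rho_tot pi1 gam) ^+ 2 * rho_tot pi1 gam.
    field; exact: (negbT (gt_eqF hrt)).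
  lra.
have htau' : tau = (Ebau_tot pi0 pi1 - A) / rho_tot pi1 gam.
  rewrite -hEt; field; exact: (negbT (gt_eqF hrt)).
have hK : (tau - S0) * Ebau_tot pi0 pi1 + (S0 ^+ 2 - tau ^+ 2) / 2 * rho_tot pi1 gam + S0 * A
   = tau * A + A ^+ 2 / rho_tot pi1 gam / 2.
  rewrite /S0 htau'; move: (negbT (gt_eqF hrt)); generalize (Ebau_tot pi0 pi1) (rho_tot pi1 gam) => E rt hrt0 /=; field; exact: hrt0.
have hmain : WC_mar + WF_mar / 2 * 3 + WR_mar = WC_tax + WR_tax + A ^+ 2 / rho_tot pi1 gam / 2.
  rewrite hWRm hWRt; lra.
have hApos : 0 < A ^+ 2 / rho_tot pi1 gam by rewrite divr_gt0 // exprn_gt0.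
have e1 : GDP_mar = GDP_tax + D / 2.
  rewrite /GDP_mar /GDP_tax /D /WF_tax -hWF; lra.
have e3 : WC_mar + WR_mar = WC_tax + WR_tax + 3 / 2 * D - A ^+ 2 / rho_tot pi1 gam.
  rewrite /D -hWF; lra.
split => //; lra.
Qed.
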